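(* Let $P=\sum_{k=0}^nq^kP_k(D)\in\mathbb{C}[q][D]$ with $D=q\frac{d}{dq}$, and let $\widetilde P=\sum_{k=0}^nq^kP_k(D)(D+1)(D+2)\cdots(D+k)$. Fix $N\geq0$ and let $R=\mathbb{C}[\varepsilon]/(\varepsilon^{N+1})$. If $I=\sum_{i,j}a_{ij}q^i\varepsilon^j\in\mathbb{C}[[q]]\otimes R$ is a perturbed solution of $P$, then $$\widetilde I=\sum_{i,j}a_{ij}q^i\varepsilon^j(\varepsilon+1)(\varepsilon+2)\cdots(\varepsilon+i)$$ is a perturbed solution of $\widetilde P$.
   Context: Write a series $J\in\mathbb{C}[[q]]\otimes R$ as $J=\sum_{j=0}^NJ^j(q)\varepsilon^j$ and put $J_r=\sum_{m=0}^rJ^{r-m}(q)\,t^m/m!\in\mathbb{C}[[q]][t]$. Operators act on $\mathbb{C}[[q]][t]$ via $D(f(q)t^m)=qf'(q)t^m+mf(q)t^{m-1}$, with $q$ acting by multiplication. $J$ is a perturbed solution of an operator $Q$ if $QJ_r=0$ for all $0\leq r\leq N$. *)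

(* Defs.v *)
From HB Require Import structures.
From mathcomp Require Import all_boot all_order all_algebra.
Set Implicit Arguments. Unset Strict Implicit. Unset Printing Implicit Defensive.
Import Order.TTheory GRing.Theory Num.Theory.
Local Open Scope ring_scope.

Section PerturbedSolutions.
Variable F : fieldType.

(* An element of F[[q]][t] (or F[[q]] (x) R) is encoded by its coefficient
   array: g i m = coefficient of q^i t^m (resp. q^i eps^m). *)
Definition ser := nat -> nat -> F.

(* D (f(q) t^m) = q f'(q) t^m + m f(q) t^(m-1), on coefficients. *)
Definition Dop (g : ser) : ser :=
  fun i m => i%:R * g i m + m.+1%:R * g i m.+1.

Definition qmul (k : nat) (g : ser) : ser :=
  fun i m => if (k <= i)%N then g (i - k)%N m else 0.

Definition polyD (p : {poly F}) (g : ser) : ser :=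
  fun i m => \sum_(l < size p) p`_l * iter l Dop g i m.

Definition applyOp (n : nat) (P : nat -> {poly F}) (g : ser) : ser :=
  fun i m => \sum_(k < n.+1) qmul k (polyD (P k) g) i m.

Definition Ptilde (P : nat -> {poly F}) (k : nat) : {poly F} :=
  P k * \prod_(1 <= l < k.+1) ('X + (l%:R)%:P).

Definition Jr (J : ser) (r : nat) : ser :=
  fun i m => if (m <= r)%N then J i (r - m)%N / (m`!)%:R else 0.

Definition perturbed_sol (N n : nat) (P : nat -> {poly F}) (J : ser) : Prop :=
  forall r, (r <= N)%N -> forall i m, applyOp n P (Jr J r) i m = 0.

Definition Itilde (N : nat) (a : ser) : ser :=
  fun i j => if (j <= N)%N then
    ((\sum_(j' < N.+1) a i j' *: 'X^j') * \prod_(1 <= l < i.+1) ('X + (l%:R)%:P))`_j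
  else 0.

End PerturbedSolutions.

(* Main.v *)
Require Import Defs.
From HB Require Import structures.
From mathcomp Require Import all_boot all_order all_algebra.
From mathcomp Require Import ring.
Import GRing.Theory.
Local Open Scope ring_scope.

Lemma L1 (F : fieldType) (hF : [pchar F] =i pred0) (N : nat) (J : ser F)
  (t : nat -> {poly F}) (Ht : forall i j, (j <= N)%N -> J i j = (t i)`_j)
  r (hr : (r <= N)%N) l i m :
  iter l (@Dop F) (Jr J r) i m =
  if (m <= r)%N then (t i * ('X + (i%:R)%:P) ^+ l)`_(r - m) / (m`!)%:R else 0.
Proof.
have nz : forall k, (k.+1%:R : F) != 0.
  by move=> k; move/pcharf0P: hF => ->.
elim: l i m => [|l IH] i m.
  rewrite /= expr0 mulr1 /Jr; case: ifP => // hm; rewrite Ht //.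
  exact: leq_trans (leq_subr _ _) hr.
rewrite iterS {1}/Dop !IH.
case: (leqP m r) => hm; last first.
  have h2 : (m.+1 <= r)%N = false by rewrite ltnNge ltnW.
  by rewrite h2 !mulr0 addr0.
set c := t i * _ ^+ l.
have -> : (t i * ('X + (i%:R)%:P) ^+ l.+1) = 'X * c + (i%:R)%:P * c.
  by rewrite /c exprS mulrCA mulrDl.
rewrite coefD coefXM coefCM.
case: (ltnP m r) => hmr.
  rewrite subn_eq0 leqNgt hmr /= factS natrM.
  have -> : (r - m).-1 = (r - m.+1)%N by rewrite subnS.
  have hf : (m`!%:R : F) != 0 by rewrite -(prednK (fact_gt0 m)) nz.
  have := nz m => hm1.
  by field; rewrite hf /= addrC natr1.
have -> : m = r by apply/eqP; rewrite eqn_leq hm hmr.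
by rewrite subnn /= mulr0 addr0 add0r mulrA.
Qed.

Definition G {F : fieldType} (n : nat) (P : nat -> {poly F}) (t : nat -> {poly F}) (i : nat) : {poly F} :=
  \sum_(k < n.+1) (if (k <= i)%N then t (i - k)%N * (P k \Po ('X + ((i - k)%N%:R)%:P)) else 0).

Lemma L3 (F : fieldType) (hF : [pchar F] =i pred0) (N : nat) (J : ser F)
  (t : nat -> {poly F}) (Ht : forall i j, (j <= N)%N -> J i j = (t i)`_j)
  r (hr : (r <= N)%N) n P i m :
  applyOp n P (Jr J r) i m =
  if (m <= r)%N then (G n P t i)`_(r - m) / (m`!)%:R else 0.
Proof.
rewrite /applyOp /qmul /polyD /G.
case: ifP => hm.
  rewrite coef_sum mulr_suml; apply: eq_bigr => k _.
  case: ifP => hk; last by rewrite coef0 mul0r.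
  rewrite comp_polyE mulr_sumr coef_sum mulr_suml; apply: eq_bigr => l _.
  by rewrite (@L1 F hF _ _ _ Ht _ hr) hm -scalerAr coefZ mulrA.
apply: big1 => k _; case: ifP => // _.
by apply: big1 => l _; rewrite (@L1 F hF _ _ _ Ht _ hr) hm mulr0.
Qed.

Lemma comp_prod (F : fieldType) k c :
  (\prod_(1 <= l < k.+1) ('X + (l%:R)%:P)) \Po ('X + (c%:R)%:P)
  = \prod_(1 <= l < k.+1) ('X + ((c + l)%N%:R)%:P) :> {poly F}.
Proof.
elim: k => [|k IH]; first by rewrite !big_geq // -polyC1 comp_polyC.
rewrite big_nat_recr // comp_polyM IH [in RHS]big_nat_recr //.
by rewrite comp_polyD comp_polyX comp_polyC -addrA -polyCD -natrD.
Qed.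

Lemma prod_split (F : fieldType) c k :
  (\prod_(1 <= l < c.+1) ('X + (l%:R)%:P)) *
  \prod_(1 <= l < k.+1) ('X + ((c + l)%N%:R)%:P)
  = \prod_(1 <= l < (c + k).+1) ('X + (l%:R)%:P) :> {poly F}.
Proof.
elim: k => [|k IH]; first by rewrite [X in _ * X]big_geq // mulr1 addn0.
by rewrite [X in _ * X]big_nat_recr // mulrA IH addnS [in RHS]big_nat_recr.
Qed.

Theorem corollary2p2p5 (F : fieldType) (hF : [pchar F] =i pred0)
  (n : nat) (P : nat -> {poly F}) (N : nat) (a : ser F) :
  perturbed_sol N n P a -> perturbed_sol N n (Ptilde P) (Itilde N a).
Proof.
move=> H r hr i m.
pose t := fun i => \sum_(j < N.+1) a i j *: 'X^j.
have Ht : forall i j, (j <= N)%N -> a i j = (t i)`_j.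
  by move=> i' j hj; rewrite /t -poly_def coef_poly ltnS hj.
pose PiL := fun c => \prod_(1 <= l < c.+1) ('X + (l%:R)%:P) : {poly F}.
have Ht' : forall i j, (j <= N)%N -> Itilde N a i j = (t i * PiL i)`_j.
  by move=> i' j hj; rewrite /Itilde hj.
have hG : forall i j, (j <= N)%N -> (G n P t i)`_j = 0.
  move=> i' j hj; have := H j hj i' 0.
  by rewrite (@L3 F hF _ _ _ Ht _ hj) leq0n subn0 fact0 divr1.
rewrite (@L3 F hF _ _ _ Ht' _ hr); case: ifP => // hm.
have -> : G n (Ptilde P) (fun i => t i * PiL i) i = PiL i * G n P t i.
  rewrite /G mulr_sumr; apply: eq_bigr => k _; case: ifP => hk; last by rewrite mulr0.
  have e : PiL i = PiL (i - k)%N * \prod_(1 <= l < k.+1) ('X + (((i - k)%N + l)%N%:R)%:P).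
    by rewrite /PiL prod_split subnK.
  rewrite /Ptilde comp_polyM comp_prod e; ring.
rewrite coefMr big1 ?mul0r // => j _.
rewrite hG ?mulr0 //.
have hj := ltn_ord j; rewrite ltnS in hj.
exact: leq_trans hj (leq_trans (leq_subr m r) hr).
Qed.
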